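(* Let $R$ be an artinian ring and $\mathcal{S}$ a full subcategory of $\operatorname{Mod}R$ which is closed under direct sums and submodules and contains $R_R$, such that $\mathcal{S}$ has only finitely many indecomposable finitely generated objects up to isomorphism, say $M_1,\dots,M_n$. Let $M=M_1\oplus\cdots\oplus M_n$, $X\in\mathcal{S}$, $H=\operatorname{Hom}_R(M,X)$, and let $p:M^{(H)}\to X$ be the map $(m_h)_{h\in H}\mapsto\sum_{h\in H}h(m_h)$ (which is an epimorphism), with kernel $K$. Then the short exact sequence $0\to K\to M^{(H)}\xrightarrow{p}X\to0$ is pure exact.
   Context: A short exact sequence $0\to A\xrightarrow{f}B\xrightarrow{g}C\to0$ of right $R$-modules is pure exact if $\operatorname{Hom}_R(N,g)$ is surjective for every finitely presented right $R$-module $N$ (equivalently, $f\otimes_R 1_Y$ is injective for every left $R$-module $Y$). $M^{(H)}$ denotes the direct sum of copies of $M$ indexed by $H$. *)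

(* Defs.v *)
From HB Require Import structures.
From mathcomp Require Import all_boot all_order all_algebra.
Set Implicit Arguments. Unset Strict Implicit. Unset Printing Implicit Defensive.
Import GRing.Theory.
Local Open Scope ring_scope.

(* Right R-modules are modelled as left modules over the converse ring R^c:
   for r : R^c and x in M, r *: x stands for x * r. *)

Section Defs.
Variable R : ringType.

Definition right_ideal (P : R -> Prop) : Prop :=
  [/\ P 0, (forall x y, P x -> P y -> P (x - y)) & (forall x r, P x -> P (x * r))].

Definition right_artinian : Prop :=
  forall I : nat -> R -> Prop, (forall k, right_ideal (I k)) ->
    (forall k x, I k.+1 x -> I k x) ->
    exists k0, forall k, (k0 <= k)%N -> forall x, I k x <-> I k0 x.

Definition submod (M : lmodType R^c) (P : M -> Prop) : Prop :=
  [/\ P 0, (forall x y, P x -> P y -> P (x - y)) & (forall (r : R^c) x, P x -> P (r *: x))].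

Definition fin_gen (M : lmodType R^c) : Prop :=
  exists s : seq M, forall x : M,
    exists c : 'I_(size s) -> R^c, x = \sum_(i < size s) c i *: s`_i.

Definition fin_pres (N : lmodType R^c) : Prop :=
  exists (k : nat) (phi : {linear 'rV[R^c]_k -> N}),
    (forall y, exists v, phi v = y) /\
    exists s : seq 'rV[R^c]_k, (forall i : 'I_(size s), phi s`_i = 0) /\
      forall v, phi v = 0 ->
        exists c : 'I_(size s) -> R^c, v = \sum_(i < size s) c i *: s`_i.

Definition indecomposable (M : lmodType R^c) : Prop :=
  (exists x : M, x <> 0) /\
  forall A B : M -> Prop, submod A -> submod B ->
    (forall x, A x -> B x -> x = 0) ->
    (forall x, exists a b, [/\ A a, B b & x = a + b]) ->
    (forall x, A x -> x = 0) \/ (forall x, B x -> x = 0).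

Definition mod_iso (A B : lmodType R^c) : Prop :=
  exists f : {linear A -> B}, bijective f.

Definition is_dsum (I : Type) (F : I -> lmodType R^c) (D : lmodType R^c)
  (iota : forall i, {linear F i -> D}) : Prop :=
  forall (Y : lmodType R^c) (g : forall i, {linear F i -> Y}),
    exists h : {linear D -> Y},
      (forall i x, h (iota i x) = g i x) /\
      (forall h' : {linear D -> Y}, (forall i x, h' (iota i x) = g i x) ->
         forall x, h' x = h x).

Definition closed_dsum (S : lmodType R^c -> Prop) : Prop :=
  forall (I : Type) (F : I -> lmodType R^c) (D : lmodType R^c)
    (iota : forall i, {linear F i -> D}),
    (forall i, S (F i)) -> is_dsum iota -> S D.

(* closed under submodules (i.e. under monomorphisms; in particular replete) *)
Definition closed_sub (S : lmodType R^c -> Prop) : Prop :=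
  forall (N Y : lmodType R^c) (f : {linear N -> Y}), injective f -> S Y -> S N.

(* 0 -> ker p -> B -> X -> 0 is pure exact: p onto, and Hom(N,p) onto for
   every finitely presented N *)
Definition pure_epi (B X : lmodType R^c) (p : {linear B -> X}) : Prop :=
  (forall x, exists b, p b = x) /\
  forall N : lmodType R^c, fin_pres N ->
    forall f : {linear N -> X}, exists g : {linear N -> B}, forall y, p (g y) = f y.

End Defs.

(* Main.v *)
Require Import Defs.
From HB Require Import structures.
From mathcomp Require Import all_boot all_order all_algebra.
From mathcomp Require Import boolp.
From Stdlib Require Import Classical.
Set Implicit Arguments. Unset Strict Implicit. Unset Printing Implicit Defensive.
Import GRing.Theory.
Local Open Scope ring_scope.

Lemma zmod_swap (V : zmodType) (a b c d : V) : a - b - (c - d) = a - c - (b - d).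
Proof. by rewrite !opprB !addrA [a - b + d]addrAC [a - c + d]addrAC addrAC. Qed.

Section Span.
Variables (R : nzRingType) (X : lmodType R^c).

Fixpoint spanP (l : seq X) (x : X) : Prop :=
  match l with
  | [::] => x = 0
  | a :: l => exists (r : R^c) y, spanP l y /\ x = r *: a + y
  end.

Lemma submodP (Q : X -> Prop) : submod Q ->
  [/\ Q 0, (forall x y, Q x -> Q y -> Q (x + y)), (forall x, Q x -> Q (- x))
    & (forall r x, Q x -> Q (r *: x))].
Proof.
case=> h0 hB hZ.
have hN : forall x, Q x -> Q (- x) by move=> x Hx; have := hB _ _ h0 Hx; rewrite sub0r.
split=> // x y Hx Hy; have := hB _ _ Hx (hN _ Hy); by rewrite opprK.
Qed.

Lemma spanP_submod l : submod (spanP l).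
Proof.
elim: l => [|a l [h0 hB hZ]] /=.
  split=> [//|x y -> ->|r x ->]; by rewrite ?subr0 ?scaler0.
split.
- by exists 0, 0; rewrite scale0r addr0.
- move=> x y [r [y1 [H1 ->]]] [s [y2 [H2 ->]]].
  exists (r - s), (y1 - y2); split; first exact: hB.
  by rewrite scalerBl opprD addrACA.
- move=> r x [s [y [H ->]]]; exists (r * s), (r *: y); split; first exact: hZ.
  by rewrite scalerDr scalerA.
Qed.

Lemma spanP_cons a l x : spanP l x -> spanP (a :: l) x.
Proof. by move=> H; exists 0, x; rewrite scale0r add0r. Qed.

Lemma spanP_mem l x : x \in l -> spanP l x.
Proof.
elim: l => [//|a l IH]; rewrite inE => /orP [/eqP ->|/IH H].
  by exists 1, 0; split; [case: (spanP_submod l)|rewrite scale1r addr0].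
exact: spanP_cons.
Qed.

Lemma spanP_sub (Q : X -> Prop) l : submod Q -> (forall x, x \in l -> Q x) ->
  forall x, spanP l x -> Q x.
Proof.
move=> /submodP [h0 hD hN hZ]; elim: l => [|a l IH] Hl x /=; first by move->.
move=> [r [y [Hy ->]]]; apply: hD; first by apply: hZ; apply: Hl; rewrite inE eqxx.
by apply: IH => // z Hz; apply: Hl; rewrite inE Hz orbT.
Qed.

Lemma spanP_sum l x : spanP l x ->
  exists c : 'I_(size l) -> R^c, x = \sum_(i < size l) c i *: l`_i.
Proof.
elim: l x => [|a l IH] x /=; first by move->; exists (fun _ => 0); rewrite big_ord0.
move=> [r [y [/IH [c ->] ->]]].
exists (fun i => if unlift ord0 i is Some j then c j else r).
rewrite big_ord_recl /= unlift_none; congr (_ + _).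
by apply: eq_bigr => i _; rewrite liftK.
Qed.

Definition DCC (P : X -> Prop) := forall C : nat -> X -> Prop,
  (forall k, submod (C k)) -> (forall k x, C k.+1 x -> C k x) ->
  (forall k x, C k x -> P x) ->
  exists k0, forall k, (k0 <= k)%N -> forall x, C k x <-> C k0 x.

Lemma chain_mono (C : nat -> X -> Prop) : (forall k x, C k.+1 x -> C k x) ->
  forall k1 k2, (k1 <= k2)%N -> forall x, C k2 x -> C k1 x.
Proof.
move=> HC k1 k2 /subnK <-; elim: (k2 - k1)%N => [//|d IH] x H.
by apply: IH; apply: HC; rewrite addSn in H.
Qed.

Lemma dcc_span (hart : right_artinian R) l : DCC (spanP l).
Proof.
elim: l => [|a l IH] C hsub hdec hin /=.
  exists 0%N => k _ x; split=> H.
  - have -> : x = 0 by apply: (hin k).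
    by case: (hsub 0%N).
  - have -> : x = 0 by apply: (hin 0%N).
    by case: (hsub k).
pose D k x := C k x /\ spanP l x.
have [k1 Hk1] : exists k1, forall k, (k1 <= k)%N -> forall x, D k x <-> D k1 x.
  apply: IH.
  - move=> k; case: (hsub k) => h0 hB hZ; case: (spanP_submod l) => s0 sB sZ.
    split; first by split.
    + by move=> x y [? ?] [? ?]; split; [apply: hB|apply: sB].
    + by move=> r x [? ?]; split; [apply: hZ|apply: sZ].
  - by move=> k x [H1 H2]; split=> //; apply: hdec.
  - by move=> k x [].
pose I k (r : R) := exists q, C k q /\ spanP l (q - (r : R^c) *: a).
have [k2 Hk2] : exists k2, forall k, (k2 <= k)%N -> forall x, I k x <-> I k2 x.
  apply: hart.
  - move=> k; case: (hsub k) => h0 hB hZ; case: (spanP_submod l) => s0 sB sZ.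
    split.
    + by exists 0; split=> //; rewrite scale0r subr0.
    + move=> x y [q1 [H1 S1]] [q2 [H2 S2]]; exists (q1 - q2); split; first exact: hB.
      rewrite (@scalerBl _ _ (x : R^c) y) zmod_swap; exact: sB.
    + move=> x r [q [H1 S1]]; exists ((r : R^c) *: q); split; first exact: hZ.
      have := sZ (r : R^c) _ S1; rewrite scalerBr scalerA; exact.
  - by move=> k x [q [H1 H2]]; exists q; split=> //; apply: hdec.
exists (maxn k1 k2) => k Hk x; split; first by apply: chain_mono; first exact: hdec.
move=> Hx; have [r [y [Hy Exy]]] := hin _ _ Hx.
have Ik0 : I (maxn k1 k2) r by exists x; split=> //; rewrite Exy addrAC subrr add0r.
have : I k r.
  apply: (Hk2 k (leq_trans (leq_maxr k1 k2) Hk) r).2.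
  exact: (Hk2 _ (leq_maxr k1 k2) r).1.
move=> [q [Hq Sq]].
have HqC : C (maxn k1 k2) q by apply: (chain_mono hdec Hk).
case: (hsub (maxn k1 k2)) => h0 hB hZ.
have Dxq : D (maxn k1 k2) (x - q).
  split; first exact: hB.
  case: (spanP_submod l) => s0 sB sZ.
  have -> : x - q = y - (q - r *: a) by rewrite Exy opprB addrA [r *: a + y]addrC.
  exact: sB.
have : D k (x - q).
  apply: (Hk1 k (leq_trans (leq_maxl k1 k2) Hk) (x - q)).2.
  exact: (Hk1 _ (leq_maxl k1 k2) (x - q)).1.
move=> [H1 _]; case: (submodP (hsub k)) => _ hD _ _.
by have := hD _ _ H1 Hq; rewrite subrK.
Qed.

End Span.
Section Lift.
Variables (R : nzRingType) (X Bm : lmodType R^c) (p : {linear Bm -> X}).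

Definition Lift (Q : X -> Prop) := exists g : X -> Bm,
  (forall r x y, Q x -> Q y -> g (r *: x + y) = r *: g x + g y) /\
  (forall x, Q x -> p (g x) = x).

Variables (Q A B : X -> Prop) (hQ : submod Q) (hA : submod A) (hB : submod B)
  (hAB : forall x, A x -> B x -> x = 0)
  (hdec : forall x, Q x -> exists a b, [/\ A a, B b & x = a + b])
  (hAQ : forall x, A x -> Q x).

Lemma proj_ex : exists pa : X -> X, forall x, Q x -> A (pa x) /\ B (x - pa x).
Proof.
have H : forall x, exists a, Q x -> A a /\ B (x - a).
  move=> x; case: (classic (Q x)) => Hx; last by exists 0.
  have [a [b [Ha Hb ->]]] := hdec Hx; exists a => _; split=> //.
  by rewrite addrAC subrr add0r.
exists (fun x => proj1_sig (cid (H x))) => x Hx; exact: (proj2_sig (cid (H x)) Hx).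
Qed.

Lemma dec_uniq x a1 a2 : A a1 -> A a2 -> B (x - a1) -> B (x - a2) -> a1 = a2.
Proof.
move=> H1 H2 H3 H4; apply/eqP; rewrite -subr_eq0; apply/eqP; apply: hAB.
  by case: hA => _ hh _; apply: hh.
have -> : a1 - a2 = (x - a2) - (x - a1) by rewrite opprB [RHS]addrC addrA subrK.
by case: hB => _ hh _; apply: hh.
Qed.

Lemma proj_lin pa : (forall x, Q x -> A (pa x) /\ B (x - pa x)) ->
  forall r x y, Q x -> Q y -> pa (r *: x + y) = r *: pa x + pa y.
Proof.
move=> Hpa r x y Hx Hy.
have [h0 hD hN hZ] := submodP hQ.
have Hrxy : Q (r *: x + y) by apply: hD=> //; apply: hZ.
have [A1 B1] := Hpa _ Hrxy; have [A2 B2] := Hpa _ Hx; have [A3 B3] := Hpa _ Hy.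
apply: (@dec_uniq (r *: x + y) _ _ A1) => //.
  by have [_ aD _ aZ] := submodP hA; apply: aD => //; apply: aZ.
have -> : r *: x + y - (r *: pa x + pa y) = r *: (x - pa x) + (y - pa y).
  by rewrite scalerBr opprD addrACA.
by have [_ bD _ bZ] := submodP hB; apply: bD => //; apply: bZ.
Qed.

Lemma lift_dsum : Lift A -> Lift B -> Lift Q.
Proof.
move=> [gA [gAl gAp]] [gB [gBl gBp]].
have [pa Hpa] := proj_ex.
exists (fun x => gA (pa x) + gB (x - pa x)); split.
  move=> r x y Hx Hy; rewrite (proj_lin Hpa r Hx Hy).
  have [A2 B2] := Hpa _ Hx; have [A3 B3] := Hpa _ Hy.
  have -> : r *: x + y - (r *: pa x + pa y) = r *: (x - pa x) + (y - pa y).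
    by rewrite scalerBr opprD addrACA.
  by rewrite gAl // gBl // scalerDr addrACA.
move=> x Hx; have [A2 B2] := Hpa _ Hx.
by rewrite linearD /= gAp // gBp // addrC subrK.
Qed.

Lemma fg_part l : (forall x, Q x <-> spanP l x) ->
  exists l', forall x, A x <-> spanP l' x.
Proof.
move=> Hl; have [pa Hpa] := proj_ex.
have Hlin := proj_lin Hpa.
have key : forall l0, (forall z, spanP l0 z -> Q z) ->
    forall x, spanP l0 x -> spanP (map pa l0) (pa x).
  elim=> [|a l0 IH] Hsub x /=.
    move=> ->; have Q0 : Q 0 by case: hQ.
    have [A0 B0] := Hpa _ Q0; apply: (@dec_uniq 0 _ _ A0) => //; first by case: hA.
    by rewrite subrr; case: hB.
  move=> [r [y [Hy ->]]].
  have Hsub' : forall z, spanP l0 z -> Q z by move=> z Hz; apply: Hsub; apply: spanP_cons.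
  have Qa : Q a by apply: Hsub; apply: spanP_mem; rewrite inE eqxx.
  rewrite Hlin //; last exact: Hsub'.
  by exists r, (pa y); split => //; apply: IH.
exists (map pa l) => x; split.
  move=> Ax; have Qx := hAQ Ax; have [A1 B1] := Hpa _ Qx.
  have -> : x = pa x.
    apply: (dec_uniq (x := x)) => //; rewrite subrr; by case: hB.
  by apply: key; [move=> z /Hl|apply/Hl].
apply: spanP_sub => // z /mapP [w Hw ->].
by have [] := Hpa w (proj2 (Hl w) (spanP_mem Hw)).
Qed.

End Lift.

Section Minimal.
Variables (R : nzRingType) (X : lmodType R^c).

Lemma minimal (P : X -> Prop) (Bad : (X -> Prop) -> Prop) :
  DCC P -> (forall Q, Bad Q -> submod Q /\ forall x, Q x -> P x) ->
  forall Q0, Bad Q0 -> exists Q, Bad Q /\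
    forall Q', Bad Q' -> (forall x, Q' x -> Q x) -> forall x, Q x -> Q' x.
Proof.
move=> Hdcc HB Q0 HQ0; apply: NNPP => Hn.
have step : forall Q, Bad Q -> exists Q', Bad Q' /\ (forall x, Q' x -> Q x) /\
    ~ (forall x, Q x -> Q' x).
  move=> Q HQ; apply: NNPP => Hn2; apply: Hn; exists Q; split=> // Q' HQ' Hs.
  apply: NNPP => Hn3; apply: Hn2; by exists Q'.
pose T := {Q : X -> Prop | Bad Q}.
pose next (q : T) : T := let s := cid (step _ (proj2_sig q)) in
  exist _ (proj1_sig s) (proj1 (proj2_sig s)).
pose C k := proj1_sig (iter k next (exist _ Q0 HQ0)).
have Hnext : forall k, (forall x, C k.+1 x -> C k x) /\ ~ (forall x, C k x -> C k.+1 x).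
  move=> k; rewrite /C /=; set q := iter k next _.
  exact: (proj2 (proj2_sig (cid (step _ (proj2_sig q))))).
have [k0 Hk0] := Hdcc C (fun k => proj1 (HB _ (proj2_sig _)))
  (fun k => proj1 (Hnext k)) (fun k => proj2 (HB _ (proj2_sig _))).
apply: (proj2 (Hnext k0)) => x Hx; apply/(Hk0 k0.+1 (leqnSn _)).
exact: Hx.
Qed.

End Minimal.
Section MkLin.
Variables (R : nzRingType) (U V : lmodType R^c) (f : U -> V)
  (hf : forall (a : R^c) x y, f (a *: x + y) = a *: f x + f y).
Definition mklin := let _ := hf in f.
HB.instance Definition _ := GRing.isLinear.Build R^c U V *:%R mklin hf.
End MkLin.

Section Sub.
Variables (R : nzRingType) (X : lmodType R^c) (Q : X -> Prop) (hQ : submod Q).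
Definition Qb : {pred X} := fun x => let _ := hQ in `[< Q x >].
Lemma Qb_closed : submod_closed Qb.
Proof.
case: hQ => h0 hB hZ; split; first by apply/asboolP.
move=> a u v /asboolP Hu /asboolP Hv; apply/asboolP.
have := hB _ _ (hZ a _ Hu) (hB _ _ h0 Hv). by rewrite sub0r opprK.
Qed.
HB.instance Definition _ := GRing.isSubmodClosed.Build _ _ Qb (GRing.submod_closed_semi Qb_closed).
Inductive subT := mkS x & x \in Qb.
Definition vS u := let: mkS x _ := u in x.
HB.instance Definition _ := [isSub for vS].
HB.instance Definition _ := [Choice of subT by <:].
HB.instance Definition _ := [SubChoice_isSubZmodule of subT by <:].
HB.instance Definition _ := [SubZmodule_isSubLmodule of subT by <:].

Definition sub_of (x : X) : subT := insubd 0 x.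
Lemma val_sub_of x : Q x -> val (sub_of x) = x.
Proof. by move=> Hx; apply: insubdK; apply/asboolP. Qed.
Lemma valQ (y : subT) : Q (val y).
Proof. exact/asboolP/(valP y). Qed.
Lemma sub_of_val (y : subT) : sub_of (val y) = y.
Proof. by apply: val_inj; rewrite val_sub_of //; apply: valQ. Qed.
Lemma sub_of_lin r x y : Q x -> Q y -> sub_of (r *: x + y) = r *: sub_of x + sub_of y.
Proof.
move=> Hx Hy; apply: val_inj; have [_ hD _ hZ] := submodP hQ.
rewrite val_sub_of; last by apply: hD => //; apply: hZ.
by rewrite linearP /= !val_sub_of.
Qed.

Lemma fg_sub l : (forall x, Q x <-> spanP l x) -> fin_gen subT.
Proof.
move=> Hl.
have key : forall l0, (forall z, spanP l0 z -> Q z) ->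
    forall x, spanP l0 x -> spanP (map sub_of l0) (sub_of x).
  elim=> [|a l0 IH] Hsub x /=.
    move=> ->; apply: val_inj; rewrite val_sub_of ?raddf0 //; by case: hQ.
  move=> [r [y [Hy ->]]].
  have Hsub' : forall z, spanP l0 z -> Q z by move=> z Hz; apply: Hsub; apply: spanP_cons.
  have Qa : Q a by apply: Hsub; apply: spanP_mem; rewrite inE eqxx.
  rewrite sub_of_lin //; last exact: Hsub'.
  by exists r, (sub_of y); split => //; apply: IH.
exists (map sub_of l) => y; apply: spanP_sum; rewrite -(sub_of_val y).
by apply: key; [move=> z /Hl|apply/Hl; apply: valQ].
Qed.

End Sub.
Unset Implicit Arguments. Set Strict Implicit.

Theorem lemma10 (R : ringType) (S : lmodType R^c -> Prop)
  (hart : right_artinian R) (hsum : closed_dsum S) (hsub : closed_sub S)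
  (hR : S (R^c)^o)
  (n : nat) (Ms : 'I_n -> lmodType R^c)
  (hMs : forall i, [/\ S (Ms i), fin_gen (Ms i) & indecomposable (Ms i)])
  (hdist : forall i j, mod_iso (Ms i) (Ms j) -> i = j)
  (hall : forall N : lmodType R^c, S N -> fin_gen N -> indecomposable N ->
            exists i, mod_iso N (Ms i))
  (M : lmodType R^c) (inj : forall i, {linear Ms i -> M}) (hM : is_dsum inj)
  (X : lmodType R^c) (hX : S X)
  (B : lmodType R^c) (e : forall h : {linear M -> X}, {linear M -> B})
  (hB : is_dsum (F := fun _ : {linear M -> X} => M) e)
  (p : {linear B -> X}) (hp : forall h m, p (e h m) = h m) :
  pure_epi p.
Proof.
have key : forall l : seq X, Lift p (spanP l).
  move=> l; apply: NNPP => Hn.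
  pose Bad (Q : X -> Prop) := [/\ submod Q, (forall x, Q x -> spanP l x),
    (exists l', forall x, Q x <-> spanP l' x) & ~ Lift p Q].
  have HBad : forall Q, Bad Q -> submod Q /\ forall x, Q x -> spanP l x.
    by move=> Q [].
  have Bl : Bad (spanP l).
    by split=> //; [exact: spanP_submod|exists l].
  have [Q [[hQ HQP [lQ HlQ] HnQ] Hmin]] := minimal (@dcc_span R X hart l) HBad Bl.
  apply: HnQ.
  case: (classic (indecomposable (subT hQ))) => Hind.
  - have SQ : S (subT hQ).
      by apply: (hsub _ _ (val : {linear subT hQ -> X})) => //; exact: val_inj.
    have [i [phi phib]] := hall _ SQ (fg_sub hQ HlQ) Hind.
    have [psi phiK psiK] := phib.
    have psil : forall (a : R^c) x y, (fun x => val (psi x)) (a *: x + y) = a *: (fun x => val (psi x)) x + (fun x => val (psi x)) y.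
      move=> a x y; cbv beta.
      have -> : psi (a *: x + y) = a *: psi x + psi y.
        apply: (can_inj phiK); rewrite psiK -[in LHS](psiK x) -[in LHS](psiK y); symmetry; exact: linearP.
      exact: linearP.
    pose F0 : {linear Ms i -> X} := mklin psil.
    have zl : forall j (a : R^c) (x y : Ms j), (fun _ => 0 : X) (a *: x + y) = a *: (fun _ => 0 : X) x + (fun _ => 0 : X) y.
      by move=> j a x y; rewrite scaler0 addr0.
    pose G (j : 'I_n) : {linear Ms j -> X} :=
      match j =P i with
      | ReflectT e => eq_rect_r (fun j => {linear Ms j -> X}) F0 e
      | ReflectF _ => mklin (zl j)
      end.
    have Gi : forall x, G i x = F0 x.
      by move=> x; rewrite /G; case: eqP => // e0; rewrite (eq_irrelevance e0 erefl).
    have [h [hh _]] := hM X G.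
    exists (fun x => e h (inj i (phi (sub_of hQ x)))); split.
      by move=> r x y Hx Hy; rewrite sub_of_lin // !linearP.
    move=> x Hx; rewrite hp hh Gi; have -> : forall z, F0 z = val (psi z) by []. 
    rewrite phiK; exact: val_sub_of.
  - case: (classic (exists y : subT hQ, y <> 0)) => Hnz; last first.
      have Z : forall x, Q x -> x = 0.
        move=> x Hx; rewrite -(val_sub_of hQ Hx).
        case: (classic (sub_of hQ x = 0)) => [->|H]; first exact: raddf0.
        by case: Hnz; exists (sub_of hQ x).
      exists (fun _ => 0); split; first by move=> *; rewrite scaler0 addr0.
      by move=> x /Z ->; rewrite raddf0.
    have [A0 [B0 [hA hB0 hAB hdec hnor]]] : exists A0 B0 : subT hQ -> Prop,
        [/\ submod A0, submod B0, (forall x, A0 x -> B0 x -> x = 0),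
          (forall x, exists a b, [/\ A0 a, B0 b & x = a + b]) &
          ~ ((forall x, A0 x -> x = 0) \/ (forall x, B0 x -> x = 0))].
      apply: NNPP => H; apply: Hind; split=> // A1 B1 hA1 hB1 h1 h2.
      apply: NNPP => H3; apply: H; exists A1, B1; split=> //.
    have [nA nB] := not_or_and _ _ hnor.
    have exnz : forall C0 : subT hQ -> Prop, ~ (forall x, C0 x -> x = 0) -> exists b, C0 b /\ b <> 0.
      move=> C0 H; apply: NNPP => H2; apply: H => x Hx; apply: NNPP => H3; apply: H2; by exists x.
    pose up (C0 : subT hQ -> Prop) x := exists y, val y = x /\ C0 y.
    have up_sub : forall C0, submod C0 -> submod (up C0).
      move=> C0 [c0 cB cZ]; split.
      - by exists 0; split=> //; exact: raddf0.
      - move=> x y [y1 [<- H1]] [y2 [<- H2]]; exists (y1 - y2); split; last exact: cB.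
        exact: raddfB.
      - move=> r x [y1 [<- H1]]; exists (r *: y1); split; last exact: cZ.
        exact: linearZ_LR.
    have up_Q : forall C0 x, up C0 x -> Q x by move=> C0 x [y [<- _]]; apply: valQ.
    have up_int : forall C0 D0 : subT hQ -> Prop, (forall x, C0 x -> D0 x -> x = 0) ->
        forall x, up C0 x -> up D0 x -> x = 0.
      move=> C0 D0 H x [y1 [<- H1]] [y2 [E H2]].
      have E' : y2 = y1 by apply: val_inj.
      by rewrite (H y1) ?raddf0 // -E'.
    have up_dec : forall C0 D0 : subT hQ -> Prop,
        (forall x, exists a b, [/\ C0 a, D0 b & x = a + b]) ->
        forall x, Q x -> exists a b, [/\ up C0 a, up D0 b & x = a + b].
      move=> C0 D0 H x Hx; have [a [b [Ha Hb E]]] := H (sub_of hQ x).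
      exists (val a), (val b); split; [by exists a|by exists b|].
      rewrite -[LHS](val_sub_of hQ Hx) E; exact: raddfD.
    have small : forall C0 D0 : subT hQ -> Prop, submod C0 -> submod D0 ->
        (forall x, C0 x -> D0 x -> x = 0) ->
        (forall x, exists a b, [/\ C0 a, D0 b & x = a + b]) ->
        (exists b, D0 b /\ b <> 0) -> Lift p (up C0).
      move=> C0 D0 hC hD hCD hCDd [b [Db bnz]].
      apply: NNPP => HnL.
      have Bup : Bad (up C0).
        split.
        - exact: up_sub.
        - by move=> x /up_Q /HQP.
        - apply: (@fg_part _ _ Q (up C0) (up D0) hQ (up_sub _ hC) (up_sub _ hD)
            (up_int _ _ hCD) (up_dec _ _ hCDd) (up_Q C0) lQ HlQ).
        - exact: HnL.
      have := Hmin _ Bup (up_Q C0) (val b) (valQ b).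
      move=> [y [E Cy]]; have E' : y = b by apply: val_inj.
      by apply: bnz; apply: hCD => //; rewrite -E'.
    have hBA : forall x, B0 x -> A0 x -> x = 0 by move=> x H1 H2; apply: hAB.
    have hdecBA : forall x, exists a b, [/\ B0 a, A0 b & x = a + b].
      by move=> x; have [a [b [Ha Hb E]]] := hdec x; exists b, a; rewrite addrC.
    apply: (@lift_dsum _ _ _ p Q (up A0) (up B0) hQ (up_sub _ hA) (up_sub _ hB0)
      (up_int _ _ hAB) (up_dec _ _ hdec)).
    + exact: (small _ _ hA hB0 hAB hdec (exnz _ nB)).
    + exact: (small _ _ hB0 hA hBA hdecBA (exnz _ nA)).
split.
  move=> x; have [g [_ Hg]] := key [:: x].
  by exists (g x); apply: Hg; apply: spanP_mem; rewrite inE eqxx.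
move=> N [k [phi [hsurj _]]] f.
pose l := [seq f (phi (delta_mx 0 j)) | j <- enum 'I_k].
have [g0 [g0l g0p]] := key l.
have Hin : forall y, spanP l (f y).
  move=> y; have [v <-] := hsurj y; rewrite (row_sum_delta v) !linear_sum.
  have [s0 sD _ sZ] := submodP (spanP_submod l).
  apply: (big_ind (spanP l)) => // j _; rewrite !linearZ; apply: sZ.
  by apply: spanP_mem; apply: map_f; rewrite mem_enum.
have gl : forall (a : R^c) x y, (fun y => g0 (f y)) (a *: x + y) =
    a *: (fun y => g0 (f y)) x + (fun y => g0 (f y)) y.
  by move=> a x y /=; rewrite linearP g0l.
exists (mklin gl) => y; exact: g0p.
Qed.
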